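(* Let $Q$ be a quadrilateral in $K^2$ and let $f:K^2\to K^2$ be an invertible linear transformation. There is $\lambda\in K$ such that for all $\mathbf v,\mathbf w\in K^2$, $$\langle \mathbf v,\mathbf w\rangle_Q=\lambda\langle f(\mathbf v),f(\mathbf w)\rangle_{f(Q)}.$$ Thus a pair of lines $\ell_1,\ell_2$ is $Q$-orthogonal if and only if $f(\ell_1),f(\ell_2)$ is $f(Q)$-orthogonal.
   Context: $K$ is a field of characteristic $\neq 2$. Every line $L$ in $K^2$ has an equation $tX-uY+v=0$ normalized so that $t=1$ if $u=0$ and $u=1$ if $u\neq 0$; coefficients denoted $t_L,u_L,v_L$. A quadrilateral $Q=ABA'B'$ consists of four distinct lines $A,B,A',B'$ (sides), not all through one point, with adjacent sides ($A,B$; $B,A'$; $A',B'$; $B',A$) not parallel; opposite sides may be parallel (three sides may be concurrent). $f(Q)$ denotes the quadrilateral $f(A)f(B)f(A')f(B')$. For $Q=ABA'B'$ let $\alpha=t_Au_Bu_{A'}u_{B'}-u_At_Bu_{A'}u_{B'}+u_Au_Bt_{A'}u_{B'}-u_Au_Bu_{A'}t_{B'}$, $\beta=t_Au_Bt_{A'}u_{B'}-u_At_Bu_{A'}t_{B'}$, $\gamma=t_At_Bt_{A'}u_{B'}-t_At_Bu_{A'}t_{B'}+t_Au_Bt_{A'}t_{B'}-u_At_Bt_{A'}t_{B'}$, and $\langle \mathbf v,\mathbf w\rangle_Q=\mathbf v^T\begin{pmatrix}\gamma&-\beta\\-\beta&\alpha\end{pmatrix}\mathbf w$. Lines $\ell_1,\ell_2$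 are $Q$-orthogonal if $\langle (u_{\ell_1},t_{\ell_1}),(u_{\ell_2},t_{\ell_2})\rangle_Q=0$. *)

(* Defs.v *)
From mathcomp Require Import all_boot all_algebra.
Set Implicit Arguments. Unset Strict Implicit. Unset Printing Implicit Defensive.
Import GRing.Theory.
Local Open Scope ring_scope.

Section Defs.
Variable K : fieldType.

(* A line  t X - u Y + v = 0, stored by its coefficients (t, u, v). *)
Record line := Line { lt : K; lu : K; lv : K }.

Definition normalized (L : line) : bool :=
  ((lu L == 0) && (lt L == 1)) || (lu L == 1).

Definition on_line (L : line) (p : K * K) : bool :=
  lt L * p.1 - lu L * p.2 + lv L == 0.

(* For normalized lines, parallel (or equal) iff same (t, u). *)
Definition parallel (L M : line) : bool :=
  (lt L == lt M) && (lu L == lu M).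

Definition line_eqb (L M : line) : bool :=
  [&& lt L == lt M, lu L == lu M & lv L == lv M].

Record quad := Quad { qA : line; qB : line; qA' : line; qB' : line }.

Definition is_quad (Q : quad) : Prop :=
  let A := qA Q in let B := qB Q in let A' := qA' Q in let B' := qB' Q in
  [/\ [&& normalized A, normalized B, normalized A' & normalized B'],
      [&& ~~ line_eqb A B, ~~ line_eqb A A', ~~ line_eqb A B', ~~ line_eqb B A',
          ~~ line_eqb B B' & ~~ line_eqb A' B'],
      ~ (exists p, [&& on_line A p, on_line B p, on_line A' p & on_line B' p]) &
      [&& ~~ parallel A B, ~~ parallel B A', ~~ parallel A' B' & ~~ parallel B' A]].

Definition alpha (Q : quad) : K :=
  let A := qA Q in let B := qB Q in let A' := qA' Q in let B' := qB' Q in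
  lt A * lu B * lu A' * lu B' - lu A * lt B * lu A' * lu B'
  + lu A * lu B * lt A' * lu B' - lu A * lu B * lu A' * lt B'.

Definition beta (Q : quad) : K :=
  let A := qA Q in let B := qB Q in let A' := qA' Q in let B' := qB' Q in
  lt A * lu B * lt A' * lu B' - lu A * lt B * lu A' * lt B'.

Definition gamma (Q : quad) : K :=
  let A := qA Q in let B := qB Q in let A' := qA' Q in let B' := qB' Q in
  lt A * lt B * lt A' * lu B' - lt A * lt B * lu A' * lt B'
  + lt A * lu B * lt A' * lt B' - lu A * lt B * lt A' * lt B'.

Definition qmx (Q : quad) : 'M[K]_2 :=
  \matrix_(i < 2, j < 2)
    (if i == j then (if i == 0 then gamma Q else alpha Q) else - beta Q).

Definition qform (Q : quad) (v w : 'cV[K]_2) : K :=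
  (v^T *m qmx Q *m w) 0 0.

Definition ldir (L : line) : 'cV[K]_2 := \col_(i < 2) [:: lu L; lt L]`_i.

Definition Qorth (Q : quad) (l1 l2 : line) : Prop :=
  qform Q (ldir l1) (ldir l2) = 0.

(* normalized line with equation t X - u Y + v = 0, assuming (t,u) <> 0 *)
Definition normalize (t u v : K) : line :=
  if u == 0 then Line 1 0 (v / t) else Line (t / u) 1 (v / u).

(* Image of L under the linear map p |-> F p (F invertible):
   the points q = F p with (t, -u) . p + v = 0, i.e. ((t, -u) F^-1) . q + v = 0. *)
Definition line_image (F : 'M[K]_2) (L : line) : line :=
  let r := (\row_(j < 2) [:: lt L; - lu L]`_j) *m invmx F in
  normalize (r 0 0) (- r 0 1) (lv L).

Definition quad_image (F : 'M[K]_2) (Q : quad) : quad :=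
  Quad (line_image F (qA Q)) (line_image F (qB Q))
       (line_image F (qA' Q)) (line_image F (qB' Q)).

End Defs.

(* Main.v *)
Require Import Defs.
From mathcomp Require Import all_boot all_algebra ring.
Set Implicit Arguments. Unset Strict Implicit.
Local Open Scope ring_scope.
Import GRing.Theory.

Lemma big_ord2 (K : fieldType) (G : 'I_2 -> K) : \sum_(i < 2) G i = G ord0 + G ord_max.
Proof. rewrite (bigD1 ord0) //= (bigD1 ord_max) //= big1 ?addr0 //.
by move=> [[|[|i]] Hi] //=.
Qed.

Definition fm (K : fieldType) (tA uA tB uB tA2 uA2 tB2 uB2 v0 v1 w0 w1 : K) : K :=
  let al := tA*uB*uA2*uB2-uA*tB*uA2*uB2+uA*uB*tA2*uB2-uA*uB*uA2*tB2 in
  let be := tA*uB*tA2*uB2-uA*tB*uA2*tB2 in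
  let ga := tA*tB*tA2*uB2-tA*tB*uA2*tB2+tA*uB*tA2*tB2-uA*tB*tA2*tB2 in
  v0*(ga*w0-be*w1)+v1*(-be*w0+al*w1).

Lemma qformE (K : fieldType) (Q : quad K) v w : qform Q v w =
  fm (lt (qA Q)) (lu (qA Q)) (lt (qB Q)) (lu (qB Q)) (lt (qA' Q)) (lu (qA' Q))
     (lt (qB' Q)) (lu (qB' Q)) (v ord0 0) (v ord_max 0) (w ord0 0) (w ord_max 0).
Proof.
rewrite /qform /fm /alpha /beta /gamma !mxE !big_ord2 !mxE !big_ord2 !mxE /= /alpha /beta /gamma.
ring.
Qed.

Lemma limg (K : fieldType) (F : 'M[K]_2) L : F \in unitmx -> normalized L ->
  exists s, s != 0 /\
   lt (line_image F L) = s * (lt L * invmx F ord0 ord0 - lu L * invmx F ord_max ord0) /\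
   lu (line_image F L) = s * (lu L * invmx F ord_max ord_max - lt L * invmx F ord0 ord_max).
Proof.
move=> uF nL.
rewrite /line_image.
set r := _ *m invmx F.
have r0 : r 0 0 = lt L * invmx F ord0 ord0 - lu L * invmx F ord_max ord0.
  by rewrite /r !mxE big_ord2 !mxE /=; ring.
have o1 : (1 : 'I_2) = ord_max by apply: val_inj.
have r1 : - r 0 1 = lu L * invmx F ord_max ord_max - lt L * invmx F ord0 ord_max.
  by rewrite o1 /r !mxE big_ord2 !mxE /=; ring.
have nz : ~ (r 0 0 = 0 /\ r 0 ord_max = 0).
  case=> h0 h1.
  have e : r *m F = \row_(j < 2) [:: lt L; - lu L]`_j by rewrite /r mulmxKV.
  have e0 := congr1 (fun M : 'M_(1,2) => M 0 ord0) e.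
  have e1 := congr1 (fun M : 'M_(1,2) => M 0 ord_max) e.
  move: e0 e1; rewrite !mxE !big_ord2 /= h0 h1 !mul0r addr0 => e0 e1.
  move: nL; rewrite /normalized -e0.
  have -> : lu L = 0 by rewrite -[lu L]opprK -e1 oppr0.
  rewrite eqxx /= eq_sym oner_eq0. move=> H; discriminate H.
rewrite /normalize o1; rewrite o1 in r1; case: ifP => hu /=.
- have ht : r 0 0 != 0.
    apply/eqP => h0; apply: nz; split => //.
    by move/eqP: hu => /eqP; rewrite oppr_eq0 => /eqP.
  exists (r 0 0)^-1; split; first by rewrite invr_eq0.
  rewrite -r0 -r1 mulVf //; split => //.
  by move/eqP: hu => ->; rewrite mulr0.
- exists (- r 0 ord_max)^-1; split; first by rewrite invr_eq0 hu.
  rewrite -r0 -r1 mulVf ?hu //; split => //.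
  by rewrite mulrC.
Qed.

Lemma Dnz (K : fieldType) (F : 'M[K]_2) : F \in unitmx ->
  invmx F ord0 ord0 * invmx F ord_max ord_max - invmx F ord0 ord_max * invmx F ord_max ord0 != 0.
Proof.
move=> uF.
have e := mulmxV uF.
have e00 := congr1 (fun M : 'M_2 => M ord0 ord0) e.
have e01 := congr1 (fun M : 'M_2 => M ord0 ord_max) e.
have e10 := congr1 (fun M : 'M_2 => M ord_max ord0) e.
have e11 := congr1 (fun M : 'M_2 => M ord_max ord_max) e.
move: e00 e01 e10 e11; rewrite !mxE !big_ord2 /= => e00 e01 e10 e11.
apply/eqP => h.
have : (F ord0 ord0 * F ord_max ord_max - F ord0 ord_max * F ord_max ord0) *
   (invmx F ord0 ord0 * invmx F ord_max ord_max - invmx F ord0 ord_max * invmx F ord_max ord0)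
  = 1.
  set a := F ord0 ord0 in e00 e01 e10 e11 *. set b := F ord0 ord_max in e00 e01 e10 e11 *.
  set c := F ord_max ord0 in e00 e01 e10 e11 *. set d := F ord_max ord_max in e00 e01 e10 e11 *.
  set x := invmx F ord0 ord0 in e00 e01 e10 e11 h *. set y := invmx F ord0 ord_max in e00 e01 e10 e11 h *.
  set z := invmx F ord_max ord0 in e00 e01 e10 e11 h *. set w := invmx F ord_max ord_max in e00 e01 e10 e11 h *.
  have -> : (a * d - b * c) * (x * w - y * z) =
    (a * x + b * z) * (c * y + d * w) - (a * y + b * w) * (c * x + d * z) by ring.
  by rewrite e00 e11 e01 e10 mulr0 subr0 mulr1.
by rewrite h mulr0 => /eqP; rewrite eq_sym oner_eq0.
Qed.

Unset Implicit Arguments. Set Strict Implicit.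

Theorem proposition2p8 (K : fieldType) (char2 : (2%:R : K) != 0)
    (Q : quad K) (F : 'M[K]_2) :
  is_quad Q -> F \in unitmx ->
  (exists lam : K, forall v w : 'cV[K]_2,
      qform Q v w = lam * qform (quad_image F Q) (F *m v) (F *m w))
  /\
  (forall l1 l2 : line K, normalized l1 -> normalized l2 ->
      (Qorth Q l1 l2 <->
       Qorth (quad_image F Q) (line_image F l1) (line_image F l2))).
Proof.
case=> /and4P [nA nB nA2 nB2] _ _ _ uF.
have D0 := Dnz uF.
have [sA [sA0 [etA euA]]] := limg uF nA.
have [sB [sB0 [etB euB]]] := limg uF nB.
have [sA2 [sA20 [etA2 euA2]]] := limg uF nA2.
have [sB2 [sB20 [etB2 euB2]]] := limg uF nB2.
set D := _ - _ in D0.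
have S0 : sA * sB * sA2 * sB2 * D != 0
  by rewrite !mulf_eq0 (negbTE sA0) (negbTE sB0) (negbTE sA20) (negbTE sB20) (negbTE D0).
split.
  exists ((sA * sB * sA2 * sB2 * D)^-1) => v w.
  have -> : qform Q v w = qform Q (invmx F *m (F *m v)) (invmx F *m (F *m w))
    by rewrite !mulKmx.
  move: (F *m v) (F *m w) => p q.
  rewrite !qformE /= etA euA etB euB etA2 euA2 etB2 euB2 !mxE !big_ord2.
  apply: (mulfI S0); rewrite mulrA mulfV // mul1r /fm /D; ring.
move=> l1 l2 n1 n2.
have [s1 [s10 [et1 eu1]]] := limg uF n1.
have [s2 [s20 [et2 eu2]]] := limg uF n2.
rewrite /Qorth !qformE /= !mxE /= etA euA etB euB etA2 euA2 etB2 euB2 et1 eu1 et2 eu2.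
set X := fm _ _ _ _ _ _ _ _ _ _ _ _.
set Y := fm _ _ _ _ _ _ _ _ _ _ _ _.
have -> : Y = (sA * sB * sA2 * sB2 * D * s1 * s2 * D * D) * X by rewrite /X /Y /fm /D; ring.
split => [->|/eqP]; first by rewrite mulr0.
by rewrite !mulf_eq0 (negbTE sA0) (negbTE sB0) (negbTE sA20) (negbTE sB20) (negbTE D0) (negbTE s10) (negbTE s20) /= => /eqP.
Qed.
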